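(* Let $t$ be real with $1\leq t\leq n$. If $S(t)>0$, then $\alpha(G)\leq\lfloor t\rfloor$.
   Context: Let $G$ be a simple graph with vertex set $V=\{1,\dots,n\}$, edge set $E$, adjacency matrix $A$ and stability number $\alpha(G)$ (maximum size of a set of pairwise nonadjacent vertices). Let $e$ be the all-ones vector, $\langle M,N\rangle=\operatorname{trace}(M^TN)$, and $X\geq 0$ mean entrywise nonnegativity. For real $t$ with $1\leq t\leq n$, $Q(t)$ is the semidefinite program $$\min \tfrac12\langle A,X\rangle\ \text{ s.t. } X\succeq 0,\ X\geq 0,\ \operatorname{trace}(X)=t,\ Xe=t\operatorname{diag}(X)$$ over symmetric $n\times n$ matrices $X$, and $S(t)$ denotes its optimal value. *)

(* Defs.v *)
From HB Require Import structures.
From mathcomp Require Import all_boot all_order all_algebra.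
From mathcomp Require Import classical_sets reals.
Set Implicit Arguments. Unset Strict Implicit. Unset Printing Implicit Defensive.
Import Order.TTheory GRing.Theory Num.Theory.
Local Open Scope ring_scope.
Local Open Scope classical_set_scope.

Definition simple_graph (n : nat) (adj : rel 'I_n) : Prop :=
  symmetric adj /\ irreflexive adj.

Definition adjmx (R : realType) (n : nat) (adj : rel 'I_n) : 'M[R]_n :=
  \matrix_(i, j) (adj i j)%:R.

Definition stable_set (n : nat) (adj : rel 'I_n) (S : {set 'I_n}) : bool :=
  [forall i in S, forall j in S, ~~ adj i j].

Definition stability_number (n : nat) (adj : rel 'I_n) : nat :=
  \max_(S : {set 'I_n} | stable_set adj S) #|S|.

Definition psd (R : realType) (n : nat) (X : 'M[R]_n) : Prop :=
  X^T = X /\ forall v : 'cV[R]_n, 0 <= (v^T *m X *m v) 0 0.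

Definition frob (R : realType) (n : nat) (M N : 'M[R]_n) : R := \tr (M^T *m N).

Definition diagv (R : realType) (n : nat) (X : 'M[R]_n) : 'cV[R]_n :=
  \col_i X i i.
Definition onesv (R : realType) (n : nat) : 'cV[R]_n := const_mx 1.

Definition Qfeasible (R : realType) (n : nat) (t : R) (X : 'M[R]_n) : Prop :=
  [/\ psd X, (forall i j, 0 <= X i j), \tr X = t &
      X *m onesv R n = t *: diagv X].

Definition Sval (R : realType) (n : nat) (adj : rel 'I_n) (t : R) : R :=
  inf [set (2^-1 * frob (adjmx R adj) X) | X in [set X : 'M[R]_n | Qfeasible t X]].

(* Main.v *)
Require Import Defs.
From HB Require Import structures.
From mathcomp Require Import all_boot all_order all_algebra.
From mathcomp Require Import classical_sets reals.
From mathcomp Require Import ring lra.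
Import Order.TTheory GRing.Theory Num.Theory.
Local Open Scope ring_scope.

Theorem mainTheorem14 (R : realType) (n : nat) (adj : rel 'I_n)
  (hG : simple_graph adj) (t : R) (ht1 : 1 <= t) (htn : t <= n%:R) :
  0 < Sval adj t -> ((stability_number adj)%:Z <= Num.floor t)%R.
Proof.
move=> Spos; rewrite leNgt; apply/negP => hlt.
have [S HS Hk] : {S : {set 'I_n} | S \in stable_set adj & stability_number adj = #|S|}.
  apply: (@eq_bigmax_cond _ (stable_set adj) (fun S : {set 'I_n} => #|S|)).
  apply/card_gt0P; exists (finset.set0 : {set 'I_n}); rewrite unfold_in /stable_set.
  by apply/forall_inP => i; rewrite finset.in_set0.
set k := stability_number adj in hlt Hk.
have hK : t < k%:R.
  apply: (lt_le_trans (floorD1_gt t)).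
  by rewrite -[k%:R]/((k%:Z)%:~R) ler_int lezD1.
have hk1 : 1 < k%:R :> R by apply: le_lt_trans hK.
set K : R := k%:R in hK hk1.
have K0 : K != 0 by rewrite gt_eqF // (lt_trans _ hk1).
have K10 : K - 1 != 0 by rewrite subr_eq0 gt_eqF.
pose a : R := t * (K - t) / (K * (K - 1)).
pose b : R := t * (t - 1) / (K * (K - 1)).
have hden : 0 < K * (K - 1) by apply: mulr_gt0; lra.
have ha : 0 <= a by apply: divr_ge0 => //; apply: mulr_ge0; lra.
have hb : 0 <= b by apply: divr_ge0 => //; apply: mulr_ge0; lra.
have E1 : K * (a + b) = t by rewrite /a /b; field; rewrite K0 K10.
have E2 : a + b * K = t * (a + b) by rewrite /a /b; field; rewrite K0 K10.
pose w (i : 'I_n) : R := (i \in S)%:R.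
have w2 : forall i, w i * w i = w i by move=> i; rewrite /w; case: (i \in S); rewrite ?mulr1 ?mulr0.
have w0 : forall i, 0 <= w i by move=> i; rewrite /w ler0n.
have wsum : \sum_i w i = K.
  rewrite /K Hk -sum1_card natr_sum [RHS]big_mkcond /=; apply: eq_bigr => i _.
  by rewrite /w; case: (i \in S).
pose X : 'M[R]_n := \matrix_(i, j) (w i * w j * (a * (i == j)%:R + b)).
have XE : forall i j, X i j = w i * w j * (a * (i == j)%:R + b) by move=> i j; rewrite mxE.
have inner : forall (u : 'I_n -> R) j,
    \sum_i u i * X i j = w j * (a * u j * w j + b * \sum_i u i * w i).
  move=> u j.
  rewrite (bigD1 j) //= [in RHS](bigD1 j) //= XE eqxx.
  rewrite (eq_bigr (fun i => u i * w i * (w j * b))); last first.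
    by move=> i /negbTE ij; rewrite XE ij /= mulr0n mulr0 add0r; ring.
  rewrite -mulr_suml /= mulr1n; ring.
have feas : Qfeasible t X.
  split.
  - split.
      by apply/matrixP => i j; rewrite mxE !XE eq_sym; ring.
    move=> v.
    pose s := \sum_i v i 0 * w i.
    have -> : (v^T *m X *m v) 0 0 = \sum_j (a * (v j 0 * w j)^+2 + b * s * (v j 0 * w j)).
      rewrite mxE; apply: eq_bigr => j _; rewrite mxE.
      rewrite (eq_bigr (fun i => v i 0 * X i j)); last by move=> i _; rewrite mxE.
      by rewrite inner -/s; ring.
    rewrite big_split /= -!mulr_sumr -/s.
    apply: addr_ge0; first by apply: mulr_ge0 => //; apply: sumr_ge0 => j _; apply: sqr_ge0.
    by rewrite -mulrA; apply: mulr_ge0 => //; rewrite -expr2; apply: sqr_ge0.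
  - move=> i j; rewrite XE; apply: mulr_ge0; first by apply: mulr_ge0.
    by apply: addr_ge0 => //; apply: mulr_ge0.
  - rewrite /mxtrace (eq_bigr (fun i => w i * (a + b))); last first.
      by move=> i _; rewrite XE eqxx w2 /= mulr1n mulr1.
    by rewrite -mulr_suml wsum E1.
  - apply/matrixP => i j; rewrite (ord1 j) !mxE.
    rewrite (eq_bigr (fun j => (fun _ => 1) j * X j i)); last first.
      by move=> j' _; rewrite !mxE; rewrite ?XE eq_sym; ring.
    rewrite inner eqxx /= mulr1n mulr1 w2.
    have -> : w i * (a * w i + b * \sum_i0 1 * w i0) = a * (w i * w i) + w i * (b * \sum_i0 1 * w i0) by ring.
    rewrite w2 (eq_bigr (fun i0 => w i0)); last by move=> ? _; rewrite mul1r.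
    rewrite wsum; transitivity (w i * (a + b * K)); first by ring.
    by rewrite E2; ring.
have frob0 : frob (adjmx R adj) X = 0.
  rewrite /frob /mxtrace; apply: big1 => i _; rewrite mxE; apply: big1 => j _.
  rewrite !mxE.
  have [jS|jS] := boolP (j \in S); last by rewrite /w (negbTE jS) /= !mul0r mulr0.
  have [iS|iS] := boolP (i \in S); last by rewrite /w (negbTE iS) /= !(mulr0, mul0r).
  move: HS; rewrite unfold_in => /forall_inP /(_ j jS) /forall_inP /(_ i iS) /negbTE ->.
  by rewrite mul0r.
move: Spos; rewrite /Sval.
set E := [set _ | _ in _]%classic.
have E0 : E 0 by exists X => //; rewrite frob0 mulr0.
have lbE : has_lbound E.
  exists 0 => y [Y [_ nnY _ _] <-].
  apply: mulr_ge0; first by rewrite invr_ge0 ler0n.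
  rewrite /frob /mxtrace; apply: sumr_ge0 => i _; rewrite mxE.
  by apply: sumr_ge0 => j _; apply: mulr_ge0; rewrite ?mxE ?ler0n.
have := ge_inf lbE E0.
by rewrite leNgt => /negbTE ->.
Qed.
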